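(* Let $\gamma$ be an admissible path. Then for any $t$ and $s$ in the domain of $\gamma$ with $t<s<t+\pi$, we have $|\gamma(s)-\gamma(t)|\ge 2\sin\frac{s-t}{2}$.
   Context: An admissible path is a continuously differentiable planar curve $\gamma$ parameterized by arclength (so $\gamma'(t)$ is a unit tangent vector) such that for all $t<s<t+\pi$ in its domain, the angle $\alpha(s,t)$ between the directions $\gamma'(s)$ and $\gamma'(t)$ satisfies $\alpha(s,t)\le s-t$ (mean curvature bounded by 1). *)

(* Defs.v *)
From Stdlib Require Import Reals.
Open Scope R_scope.

Definition is_interval (I : R -> Prop) : Prop :=
  forall a b c, I a -> I c -> a <= b <= c -> I b.

Definition has_deriv_on (I : R -> Prop) (f f' : R -> R) : Prop :=
  forall t, I t -> forall eps, 0 < eps -> exists delta, 0 < delta /\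
    forall u, I u -> u <> t -> Rabs (u - t) < delta ->
      Rabs ((f u - f t) / (u - t) - f' t) < eps.

Definition continuous_on_I (I : R -> Prop) (g : R -> R) : Prop :=
  forall t, I t -> forall eps, 0 < eps -> exists delta, 0 < delta /\
    forall u, I u -> Rabs (u - t) < delta -> Rabs (g u - g t) < eps.

(** Angle between two vectors (a1,a2), (b1,b2) of the plane, for unit vectors:
    arccos of the dot product, in [0, PI]. *)
Definition angle (a1 a2 b1 b2 : R) : R := acos (a1 * b1 + a2 * b2).

Definition admissible (I : R -> Prop) (x y : R -> R) : Prop :=
  is_interval I /\
  exists x' y' : R -> R,
    has_deriv_on I x x' /\ has_deriv_on I y y' /\
    continuous_on_I I x' /\ continuous_on_I I y' /\
    (forall t, I t -> x' t ^ 2 + y' t ^ 2 = 1) /\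
    (forall t s, I t -> I s -> t < s < t + PI ->
       angle (x' s) (y' s) (x' t) (y' t) <= s - t).

(* Main.v *)
Require Import Defs.
From Stdlib Require Import Reals.
Open Scope R_scope.
From Stdlib Require Import Lra Psatz Classical.

Lemma mono_aux (F : R -> R) a b e : a < b -> 0 < e ->
  (forall c, a <= c <= b -> exists d, 0 < d /\ forall u, a <= u <= b -> u <> c ->
     Rabs (u - c) < d -> - e < (F u - F c) / (u - c)) ->
  F a - e * (b - a) <= F b.
Proof.
  intros Hab He H.
  set (E := fun c => a <= c <= b /\ F a - e * (c - a) <= F c).
  assert (Hb : bound E) by (exists b; intros c [Hc _]; lra).
  assert (Hex : exists c, E c) by (exists a; unfold E; split; lra).
  destruct (completeness E Hb Hex) as [m [Hub Hlub]].
  assert (Ham : a <= m) by (apply Hub; unfold E; split; lra).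
  assert (Hmb : m <= b) by (apply Hlub; intros c [Hc _]; lra).
  assert (Em : E m).
  { destruct (Req_dec m a) as [->|Hma].
    - unfold E; split; lra.
    - destruct (H m (conj Ham Hmb)) as [d [Hd Hdq]].
      destruct (classic (exists u, E u /\ m - d < u)) as [[u [[Hu1 Hu2] Hu3]]|Hno].
      + assert (Hum : u <= m) by (apply Hub; split; assumption).
        destruct (Req_dec u m) as [->|Hne].
        * split; assumption.
        * assert (Hq := Hdq u Hu1 Hne).
          assert (Habs : Rabs (u - m) < d) by (rewrite Rabs_left by lra; lra).
          specialize (Hq Habs).
          set (q := (F u - F m) / (u - m)) in Hq.
          assert (Hq' : F u - F m = q * (u - m)) by (unfold q; field; lra).
          split; [lra|]. nra.
      + exfalso.
        assert (m <= m - d).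
        { apply Hlub. intros c Ec. destruct (Rle_dec c (m - d)); [assumption|].
          exfalso; apply Hno; exists c; split; [assumption|lra]. }
        lra. }
  destruct (Req_dec m b) as [<-|Hmb'].
  - destruct Em; assumption.
  - exfalso.
    destruct (H m (conj Ham Hmb)) as [d [Hd Hdq]].
    set (u := m + Rmin d (b - m) / 2).
    assert (Hmin1 : Rmin d (b - m) <= d) by apply Rmin_l.
    assert (Hmin2 : Rmin d (b - m) <= b - m) by apply Rmin_r.
    assert (Hmin0 : 0 < Rmin d (b - m)) by (apply Rmin_glb_lt; lra).
    assert (Hu : a <= u <= b) by (unfold u; lra).
    assert (Hne : u <> m) by (unfold u; lra).
    assert (Habs : Rabs (u - m) < d) by (rewrite Rabs_right by (unfold u; lra); unfold u; lra).
    specialize (Hdq u Hu Hne Habs).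
    set (q := (F u - F m) / (u - m)) in Hdq.
    assert (Hq' : F u - F m = q * (u - m)) by (unfold q; field; lra).
    destruct Em as [_ Em].
    assert (Eu : E u) by (split; [assumption|]; assert (u - m > 0) by (unfold u; lra); nra).
    assert (u <= m) by (apply Hub; assumption).
    unfold u in *; lra.
Qed.

Lemma mono (F : R -> R) a b : a < b ->
  (forall c, a <= c <= b -> forall e, 0 < e -> exists d, 0 < d /\ forall u, a <= u <= b -> u <> c ->
     Rabs (u - c) < d -> - e < (F u - F c) / (u - c)) ->
  F a <= F b.
Proof.
  intros Hab H.
  destruct (Rle_dec (F a) (F b)) as [|Hn]; [assumption|].
  exfalso.
  set (e := (F a - F b) / (2 * (b - a))).
  assert (He : 0 < e) by (unfold e; apply Rdiv_lt_0_compat; lra).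
  assert (Hk := mono_aux F a b e Hab He (fun c Hc => H c Hc e He)).
  assert (e * (b - a) = (F a - F b) / 2) by (unfold e; field; lra).
  lra.
Qed.

Lemma dot_ge a1 a2 b1 b2 th : a1 ^ 2 + a2 ^ 2 = 1 -> b1 ^ 2 + b2 ^ 2 = 1 ->
  angle a1 a2 b1 b2 <= th -> th <= PI -> cos th <= a1 * b1 + a2 * b2.
Proof.
  unfold angle; intros Ha Hb Hang Hth.
  assert (Hd : -1 <= a1 * b1 + a2 * b2 <= 1).
  { assert (h1 := pow2_ge_0 (a1 + b1)); assert (h2 := pow2_ge_0 (a2 + b2)); assert (h3 := pow2_ge_0 (a1 - b1)); assert (h4 := pow2_ge_0 (a2 - b2)); split; nra. }
  destruct (acos_bound (a1 * b1 + a2 * b2)).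
  rewrite <- (cos_acos _ Hd).
  apply cos_decr_1; lra.
Qed.

Theorem lemma15 (I : R -> Prop) (x y : R -> R) :
  admissible I x y ->
  forall t s, I t -> I s -> t < s < t + PI ->
    2 * sin ((s - t) / 2) <= sqrt ((x s - x t) ^ 2 + (y s - y t) ^ 2).
Proof.
  intros [Hint [x' [y' [Dx [Dy [Cx [Cy [Hunit Hang]]]]]]]] t s It Is Hts.
  set (m := (t + s) / 2).
  assert (Isub : forall u, t <= u <= s -> I u) by (intros u Hu; exact (Hint t u s It Is Hu)).
  assert (Im : I m) by (apply Isub; unfold m; lra).
  set (ux := x' m). set (uy := y' m).
  assert (Hu : ux ^ 2 + uy ^ 2 = 1) by (apply Hunit; exact Im).
  assert (Hdot : forall tau, t <= tau <= s -> cos (tau - m) <= ux * x' tau + uy * y' tau).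
  { intros tau Htau.
    assert (Itau := Isub tau Htau).
    assert (Hut := Hunit tau Itau).
    destruct (Rtotal_order tau m) as [Hlt|[Heq|Hgt]].
    - assert (Ha := Hang tau m Itau Im ltac:(unfold m in *; lra)).
      replace (tau - m) with (- (m - tau)) by ring. rewrite cos_neg.
      apply dot_ge; auto. unfold m in *; lra.
    - subst tau. replace (m - m) with 0 by ring. rewrite cos_0. unfold ux, uy. nra.
    - assert (Ha := Hang m tau Im Itau ltac:(unfold m in *; lra)).
      replace (ux * x' tau + uy * y' tau) with (x' tau * ux + y' tau * uy) by ring.
      apply dot_ge; auto. unfold m in *; lra. }
  set (F := fun u => ux * x u + uy * y u - sin (u - m)).
  assert (HF : F t <= F s).
  { apply mono; [lra|].
    intros c Hc e He.
    assert (Ic := Isub c Hc).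
    set (e1 := e / 3).
    assert (He1 : 0 < e1) by (unfold e1; lra).
    destruct (Dx c Ic e1 He1) as [dx [Hdx Hqx]].
    destruct (Dy c Ic e1 He1) as [dy [Hdy Hqy]].
    destruct (derivable_pt_lim_sin (c - m) e1 He1) as [ds Hqs].
    exists (Rmin dx (Rmin dy ds)).
    split. { apply Rmin_glb_lt; [lra|apply Rmin_glb_lt; [lra|apply cond_pos]]. }
    intros u Hu' Hne Habs.
    assert (Iu := Isub u Hu').
    assert (Hm1 := Rmin_l dx (Rmin dy ds)).
    assert (Hm2 := Rmin_r dx (Rmin dy ds)).
    assert (Hm3 := Rmin_l dy ds).
    assert (Hm4 := Rmin_r dy ds).
    assert (Hne' : u - c <> 0) by lra.
    specialize (Hqx u Iu Hne ltac:(lra)).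
    specialize (Hqy u Iu Hne ltac:(lra)).
    specialize (Hqs (u - c) Hne' ltac:(lra)).
    replace (c - m + (u - c)) with (u - m) in Hqs by ring.
    set (qx := (x u - x c) / (u - c)) in Hqx.
    set (qy := (y u - y c) / (u - c)) in Hqy.
    set (qs := (sin (u - m) - sin (c - m)) / (u - c)) in Hqs.
    assert (Heq : (F u - F c) / (u - c) = ux * qx + uy * qy - qs).
    { unfold F, qx, qy, qs. field. exact Hne'. }
    rewrite Heq.
    apply Rabs_def2 in Hqx. apply Rabs_def2 in Hqy. apply Rabs_def2 in Hqs.
    assert (Hd := Hdot c Hc).
    assert (Hux : -1 <= ux <= 1) by (split; nra).
    assert (Huy : -1 <= uy <= 1) by (split; nra).
    assert (ux * (qx - x' c) >= - e1).
    { assert (h := Rmult_le_pos (1 + ux) (e1 + (qx - x' c)) ltac:(lra) ltac:(lra)).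
      assert (h' := Rmult_le_pos (1 - ux) (e1 - (qx - x' c)) ltac:(lra) ltac:(lra)). nra. }
    assert (uy * (qy - y' c) >= - e1).
    { assert (h := Rmult_le_pos (1 + uy) (e1 + (qy - y' c)) ltac:(lra) ltac:(lra)).
      assert (h' := Rmult_le_pos (1 - uy) (e1 - (qy - y' c)) ltac:(lra) ltac:(lra)). nra. }
    unfold e1 in *. lra. }
  unfold F in HF.
  replace (s - m) with ((s - t) / 2) in HF by (unfold m; field).
  replace (t - m) with (- ((s - t) / 2)) in HF by (unfold m; field).
  rewrite sin_neg in HF.
  set (P := ux * (x s - x t) + uy * (y s - y t)).
  assert (HP : 2 * sin ((s - t) / 2) <= P) by (unfold P; lra).
  assert (HCS : P ^ 2 <= (x s - x t) ^ 2 + (y s - y t) ^ 2).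
  { unfold P. assert (h := pow2_ge_0 (ux * (y s - y t) - uy * (x s - x t))).
    replace ((x s - x t) ^ 2 + (y s - y t) ^ 2) with ((ux ^ 2 + uy ^ 2) * ((x s - x t) ^ 2 + (y s - y t) ^ 2)) by (rewrite Hu; ring).
    nra. }
  destruct (Rle_dec P 0) as [Hp|Hp].
  - assert (0 <= sqrt ((x s - x t) ^ 2 + (y s - y t) ^ 2)) by apply sqrt_pos. lra.
  - rewrite <- (sqrt_pow2 P) in HP by lra.
    apply Rle_trans with (1 := HP). apply sqrt_le_1_alt. exact HCS.
Qed.
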